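(* Let $\nu>0$, let $K$ be a smooth positive function, let $J(u)=\int K(u)\,du$ be an antiderivative of $K$, and let $A,B,D$ be constants with $D\neq 0$. (i) If $A\neq 0$ and $C(u)=D\,K(u)\left(AJ(u)+B\right)^{1/A}$ (on a range of $u$ where $AJ(u)+B>0$), then the equation $C(u)u_t=z^{-\nu}\left(K(u)z^{\nu}u_z\right)_z$ admits the Lie point symmetry generator $$Y_3=z\partial_z-2\,\frac{AJ(u)+B}{K(u)}\,\partial_u .$$ (ii) If $B\neq 0$ and $C(u)=D\,K(u)\exp\!\left(\frac{1}{B}J(u)\right)$, then the same equation admits the generator $Y_3=z\partial_z-\frac{2B}{K(u)}\partial_u$.
   Context: Here $u=u(z,t)$ with $z>0$, $t>0$. A vector field $Y=\xi\partial_z+\tau\partial_t+\eta\partial_u$ (coefficients depending on $z,t,u$) is an admitted Lie point symmetry generator of the equation if its second prolongation annihilates $C(u)u_t-K'(u)u_z^2-K(u)u_{zz}-\frac{\nu}{z}K(u)u_z$ on the solution manifold of the equation (equivalently, the one-parameter local group it generates maps solutions to solutions). *)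

(* Defs.v *)
From Stdlib Require Import Reals.
From Coquelicot Require Import Coquelicot.
Open Scope R_scope.

Definition fn3 := R -> R -> R -> R.

Definition pz (f : fn3) z t u := Derive (fun x => f x t u) z.
Definition pt (f : fn3) z t u := Derive (fun x => f z x u) t.
Definition pu (f : fn3) z t u := Derive (fun x => f z t x) u.

Definition Dz3 (f : fn3) z t u uz := pz f z t u + uz * pu f z t u.
Definition Dt3 (f : fn3) z t u ut := pt f z t u + ut * pu f z t u.

Definition etaZ (xi tau eta : fn3) z t u uz ut :=
  Dz3 eta z t u uz - uz * Dz3 xi z t u uz - ut * Dz3 tau z t u uz.
Definition etaT (xi tau eta : fn3) z t u uz ut :=
  Dt3 eta z t u ut - uz * Dt3 xi z t u ut - ut * Dt3 tau z t u ut.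

Definition Dz5 (g : R -> R -> R -> R -> R -> R) z t u uz ut uzz uzt :=
  Derive (fun x => g x t u uz ut) z + uz * Derive (fun x => g z t x uz ut) u
  + uzz * Derive (fun x => g z t u x ut) uz + uzt * Derive (fun x => g z t u uz x) ut.
Definition Dt5 (g : R -> R -> R -> R -> R -> R) z t u uz ut uzt utt :=
  Derive (fun x => g z x u uz ut) t + ut * Derive (fun x => g z t x uz ut) u
  + uzt * Derive (fun x => g z t u x ut) uz + utt * Derive (fun x => g z t u uz x) ut.

Definition etaZZ (xi tau eta : fn3) z t u uz ut uzz uzt :=
  Dz5 (etaZ xi tau eta) z t u uz ut uzz uzt
  - uzz * Dz3 xi z t u uz - uzt * Dz3 tau z t u uz.
Definition etaZT (xi tau eta : fn3) z t u uz ut uzz uzt utt :=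
  Dt5 (etaZ xi tau eta) z t u uz ut uzt utt
  - uzz * Dt3 xi z t u ut - uzt * Dt3 tau z t u ut.
Definition etaTT (xi tau eta : fn3) z t u uz ut uzt utt :=
  Dt5 (etaT xi tau eta) z t u uz ut uzt utt
  - uzt * Dt3 xi z t u ut - utt * Dt3 tau z t u ut.

(* A second-order differential function F(z,t,u,u_z,u_t,u_zz,u_zt,u_tt). *)
Definition fn8 := R -> R -> R -> R -> R -> R -> R -> R -> R.

(* The second prolongation pr^(2) Y of Y = xi d_z + tau d_t + eta d_u,
   applied to F, at a jet point. *)
Definition pr2 (xi tau eta : fn3) (F : fn8) z t u uz ut uzz uzt utt :=
    xi z t u * Derive (fun x => F x t u uz ut uzz uzt utt) z
  + tau z t u * Derive (fun x => F z x u uz ut uzz uzt utt) t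
  + eta z t u * Derive (fun x => F z t x uz ut uzz uzt utt) u
  + etaZ xi tau eta z t u uz ut * Derive (fun x => F z t u x ut uzz uzt utt) uz
  + etaT xi tau eta z t u uz ut * Derive (fun x => F z t u uz x uzz uzt utt) ut
  + etaZZ xi tau eta z t u uz ut uzz uzt * Derive (fun x => F z t u uz ut x uzt utt) uzz
  + etaZT xi tau eta z t u uz ut uzz uzt utt * Derive (fun x => F z t u uz ut uzz x utt) uzt
  + etaTT xi tau eta z t u uz ut uzt utt * Derive (fun x => F z t u uz ut uzz uzt x) utt.

Definition admits_symmetry (dom : R -> R -> R -> Prop) (xi tau eta : fn3) (F : fn8) : Prop :=
  forall z t u uz ut uzz uzt utt,
    dom z t u ->
    F z t u uz ut uzz uzt utt = 0 ->
    pr2 xi tau eta F z t u uz ut uzz uzt utt = 0.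

(* The equation C(u)u_t - K'(u)u_z^2 - K(u)u_zz - (nu/z)K(u)u_z = 0,
   i.e. C(u) u_t = z^{-nu} (K(u) z^nu u_z)_z. *)
Definition radialF (nu : R) (C K : R -> R) : fn8 :=
  fun z t u uz ut uzz uzt utt =>
    C u * ut - Derive K u * uz ^ 2 - K u * uzz - nu / z * K u * uz.

(* Main.v *)
Require Import Defs.
From Stdlib Require Import Reals Lra FunctionalExtensionality.
From Coquelicot Require Import Coquelicot.
Open Scope R_scope.

Lemma isd_mulr f x a c : is_derive f x a -> is_derive (fun y => f y * c) x (a * c).
Proof. intro H. apply is_derive_Reals in H. apply is_derive_Reals.
replace (a*c) with (a*c + f x * 0) by ring. apply (derivable_pt_lim_mult f (fun _ => c)); auto. apply derivable_pt_lim_const. Qed.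
Lemma isd_mul f g x a b : is_derive f x a -> is_derive g x b -> is_derive (fun y => f y * g y) x (a * g x + f x * b).
Proof. intros H H'. apply is_derive_Reals in H. apply is_derive_Reals in H'. apply is_derive_Reals.
apply (derivable_pt_lim_mult f g); auto. Qed.
Lemma isd_plus f g x a b : is_derive f x a -> is_derive g x b -> is_derive (fun y => f y + g y) x (a + b).
Proof. intros H H'. apply is_derive_Reals in H. apply is_derive_Reals in H'. apply is_derive_Reals.
apply (derivable_pt_lim_plus f g); auto. Qed.
Lemma isd_minus f g x a b : is_derive f x a -> is_derive g x b -> is_derive (fun y => f y - g y) x (a - b).
Proof. intros H H'. apply is_derive_Reals in H. apply is_derive_Reals in H'. apply is_derive_Reals.
apply (derivable_pt_lim_minus f g); auto. Qed.

Lemma general (nu : R) (C K E E1 : R -> R) z t u uz ut uzz uzt utt c1 k2 e2 :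
  z <> 0 -> K u <> 0 ->
  is_derive C u c1 -> ex_derive K u -> is_derive (Derive K) u k2 ->
  (forall x, is_derive E x (E1 x)) -> is_derive E1 u e2 ->
  E u * c1 - E u * Derive K u * C u / K u + 2 * C u = 0 ->
  - E u * k2 - Derive K u * E1 u - K u * e2 + E u * (Derive K u)^2 / K u = 0 ->
  radialF nu C K z t u uz ut uzz uzt utt = 0 ->
  pr2 (fun z t u => z) (fun z t u => 0) (fun z t u => E u) (radialF nu C K)
    z t u uz ut uzz uzt utt = 0.
Proof.
intros Hz HK HC HK1 HK2 HE HE1 I1 I2 HF.
assert (EZ : etaZ (fun z t u => z) (fun z t u => 0) (fun z t u => E u)
   = fun z t u uz ut => uz * E1 u - uz).
{ do 5 (apply functional_extensionality; intro).
  unfold etaZ, Dz3, pz, pu. rewrite !Derive_const, Derive_id.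
  rewrite (is_derive_unique _ _ _ (HE _)). ring. }
assert (ET : etaT (fun z t u => z) (fun z t u => 0) (fun z t u => E u)
   = fun z t u uz ut => ut * E1 u).
{ do 5 (apply functional_extensionality; intro).
  unfold etaT, Dt3, pt, pu. rewrite !Derive_const.
  rewrite (is_derive_unique _ _ _ (HE _)). ring. }
unfold pr2, etaZZ, etaZT, etaTT, Dz5, Dt5, Dz3, Dt3, pz, pu, pt.
rewrite EZ, ET. rewrite !Derive_const, Derive_id.
unfold radialF in *.
simpl.
rewrite !Derive_const.
assert (Dz : Derive (fun x : R =>
     C u * ut - Derive K u * (uz * (uz * 1)) - K u * uzz - nu / x * K u * uz) z
   = nu / z^2 * K u * uz).
{ apply is_derive_unique. auto_derive; [exact Hz| field; exact Hz]. }
assert (Du : Derive (fun x : R =>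
     C x * ut - Derive K x * (uz * (uz * 1)) - K x * uzz - nu / z * K x * uz) u
   = c1 * ut - k2 * uz^2 - Derive K u * uzz - nu/z * Derive K u * uz).
{ apply is_derive_unique.
  apply (is_derive_ext (fun x => (C x * ut - Derive K x * (uz * (uz * 1))) + (- uzz - nu / z * uz) * K x)).
  { intro x. match goal with |- ?a = ?b => change (@eq R a b) end. ring. }
  replace (c1 * ut - k2 * uz^2 - Derive K u * uzz - nu/z * Derive K u * uz) with
   ((c1 * ut - k2 * (uz * (uz * 1))) + (- uzz - nu / z * uz) * Derive K u) by ring.
  apply isd_plus.
  - apply isd_minus.
    + apply isd_mulr. exact HC.
    + apply isd_mulr. exact HK2.
  - apply (is_derive_ext (fun x => K x * (- uzz - nu / z * uz))).
    { intro x. match goal with |- ?a = ?b => change (@eq R a b) end. ring. }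
    replace ((- uzz - nu / z * uz) * Derive K u) with (Derive K u * (- uzz - nu / z * uz)) by ring.
    apply isd_mulr. apply Derive_correct. exact HK1. }
assert (Duz : Derive (fun x : R =>
     C u * ut - Derive K u * (x * (x * 1)) - K u * uzz - nu / z * K u * x) uz
   = - 2 * Derive K u * uz - nu / z * K u).
{ apply is_derive_unique. auto_derive; [exact I| ring]. }
assert (Dut : Derive (fun x : R =>
     C u * x - Derive K u * (uz * (uz * 1)) - K u * uzz - nu / z * K u * uz) ut
   = C u).
{ apply is_derive_unique. auto_derive; [exact I| ring]. }
assert (Duzz : Derive (fun x : R =>
     C u * ut - Derive K u * (uz * (uz * 1)) - K u * x - nu / z * K u * uz) uzz
   = - K u).
{ apply is_derive_unique. auto_derive; [exact I| ring]. }
assert (DE : Derive (fun x : R => uz * E1 x - uz) u = uz * e2).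
{ apply is_derive_unique. replace (uz * e2) with (e2 * uz - 0) by ring.
  apply isd_minus.
  - apply (is_derive_ext (fun x => E1 x * uz)).
    { intro x. match goal with |- ?a = ?b => change (@eq R a b) end. ring. }
    apply isd_mulr. exact HE1.
  - apply is_derive_Reals; apply derivable_pt_lim_const. }
assert (DE2 : Derive (fun x : R => x * E1 u - x) uz = E1 u - 1).
{ apply is_derive_unique. auto_derive; [exact I| ring]. }
rewrite Dz, Du, Duz, Dut, Duzz, DE, DE2.
assert (Huzz : uzz = (C u * ut - Derive K u * uz ^ 2 - nu / z * K u * uz) / K u).
{ assert (X: C u * ut - Derive K u * uz ^ 2 - nu / z * K u * uz = K u * uzz) by lra. rewrite X. field. exact HK. }
rewrite Huzz.
match goal with |- ?L = 0 => transitivity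
  (ut * (E u * c1 - E u * Derive K u * C u / K u + 2 * C u) +
   uz^2 * (- E u * k2 - Derive K u * E1 u - K u * e2 + E u * (Derive K u)^2 / K u)) end.
{ field. auto. }
rewrite I1, I2. ring.
Qed.

Ltac toR K := match goal with |- ?a = ?b => change (@eq R a b) end; try change (Derive (fun x => K x)) with (Derive K); try change (Derive (fun x => Derive K x)) with (Derive (Derive K)).

Theorem mainTheorem2 (nu : R) (K J : R -> R) :
  0 < nu ->
  (forall n x, ex_derive_n K n x) ->
  (forall x, 0 < K x) ->
  (forall x, is_derive J x (K x)) ->
  (* (i) *)
  (forall A B D : R, A <> 0 -> D <> 0 ->
     admits_symmetry
       (fun z t u => 0 < z /\ 0 < t /\ 0 < A * J u + B)
       (fun z t u => z) (fun z t u => 0)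
       (fun z t u => - 2 * ((A * J u + B) / K u))
       (radialF nu (fun u => D * K u * Rpower (A * J u + B) (1 / A)) K))
  /\
  (* (ii) *)
  (forall B D : R, B <> 0 -> D <> 0 ->
     admits_symmetry
       (fun z t u => 0 < z /\ 0 < t)
       (fun z t u => z) (fun z t u => 0)
       (fun z t u => - (2 * B / K u))
       (radialF nu (fun u => D * K u * exp (1 / B * J u)) K)).
Proof.
intros Hnu HKn HKp HJ.
assert (HK1 : forall x, ex_derive K x) by (intro x; exact (HKn 1%nat x)).
assert (HK2 : forall x, ex_derive (Derive K) x) by (intro x; exact (HKn 2%nat x)).
assert (DJ : forall x, Derive J x = K x) by (intro x; apply is_derive_unique, HJ).
assert (EJ : forall x, ex_derive J x) by (intro x; eexists; apply HJ).
assert (HK0 : forall x, K x <> 0) by (intro x; specialize (HKp x); lra).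
split.
- intros A B D HA HD z t u uz ut uzz uzt utt [Hz [Ht HP]] HF.
  set (E := fun x => - 2 * ((A * J x + B) / K x)).
  set (E1 := fun x => - 2 * ((A * K x * K x - (A * J x + B) * Derive K x) / (K x * K x))).
  set (C := fun u => D * K u * Rpower (A * J u + B) (1 / A)).
  set (k2 := Derive (Derive K) u).
  apply (general nu C K E E1 z t u uz ut uzz uzt utt
    ((E u * Derive K u * C u / K u - 2 * C u) / E u) k2
    ((- E u * k2 - Derive K u * E1 u + E u * (Derive K u)^2 / K u) / K u)).
  + lra.
  + auto.
  + unfold C, Rpower. auto_derive.
    { repeat split; auto. }
    rewrite DJ. unfold E. toR K; field. repeat split; auto; lra.
  + auto.
  + apply Derive_correct. auto.
  + intro x. unfold E, E1. auto_derive.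
    { repeat split; auto. }
    rewrite DJ. toR K; field. auto.
  + unfold E1. auto_derive.
    { repeat split; auto. }
    rewrite DJ. unfold E. toR K. fold k2. field. auto.
  + unfold E. toR K; field. repeat split; auto; lra.
  + toR K; field. auto.
  + exact HF.
- intros B D HB HD z t u uz ut uzz uzt utt [Hz Ht] HF.
  set (E := fun x => - (2 * B / K x)).
  set (E1 := fun x => 2 * B * Derive K x / (K x * K x)).
  set (C := fun u => D * K u * exp (1 / B * J u)).
  set (k2 := Derive (Derive K) u).
  apply (general nu C K E E1 z t u uz ut uzz uzt utt
    ((E u * Derive K u * C u / K u - 2 * C u) / E u) k2
    ((- E u * k2 - Derive K u * E1 u + E u * (Derive K u)^2 / K u) / K u)).
  + lra.
  + auto.
  + unfold C. auto_derive.
    { repeat split; auto. }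
    rewrite DJ. unfold E. toR K; field. repeat split; auto.
  + auto.
  + apply Derive_correct. auto.
  + intro x. unfold E, E1. auto_derive.
    { repeat split; auto. }
    toR K; field. auto.
  + unfold E1. auto_derive.
    { repeat split; auto. }
    unfold E. toR K. fold k2. field. auto.
  + unfold E. toR K; field. repeat split; auto.
  + toR K; field. auto.
  + exact HF.
Qed.
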